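(* Let $m\ge 2$ and let $\tau=\tau_1\tau_2\cdots\tau_k$ be a partition with exactly $m$ blocks such that $\tau_i=i$ for each $i\in[m-1]$. Then \[\sum_{n\ge0}p_n(12\cdots(m+1),\tau)x^n=\sum_{n\ge0}p_n(12\cdots(m+1))x^n-\left(\frac{x}{1-(m-1)x}\right)^{k-m}\frac{x}{1-mx}\prod_{j=1}^{m-1}\frac{x}{1-jx}.\] In particular this generating function depends only on $k$ and $m$, not on $\tau$ itself.
   Context: Set partitions of $[n]$ are represented by canonical sequential forms (restricted growth words): $\pi=\pi_1\cdots\pi_n$ with $\pi_1=1$, $\pi_{i+1}\le\max(\pi_1,\dots,\pi_i)+1$, where $\pi_j$ is the index of the block containing $j$ and blocks are ordered by their minima; the empty partition is the unique partition of $[0]$. $\pi$ contains a pattern $\tau$ if some subsequence of $\pi$ is order-isomorphic to $\tau$, and avoids it otherwise. $p_n(T)$ denotes the number of partitions of $[n]$ avoiding all patterns in $T$. *)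

(* Defs.v *)
From HB Require Import structures.
From mathcomp Require Import all_boot all_order all_algebra.
Set Implicit Arguments. Unset Strict Implicit. Unset Printing Implicit Defensive.
Import Order.TTheory GRing.Theory Num.Theory.

(* Restricted growth words (canonical sequential forms), letters start at 1.
   rgw_aux mx s : s continues a word whose current maximum is mx. *)
Fixpoint rgw_aux (mx : nat) (s : seq nat) : bool :=
  match s with
  | [::] => true
  | x :: s' => (0 < x) && (x <= mx.+1) && rgw_aux (maxn mx x) s'
  end.

Definition is_rgw (s : seq nat) : bool := rgw_aux 0 s.

Definition nblocks (s : seq nat) : nat := \max_(x <- s) x.

Definition order_iso (s t : seq nat) : bool :=
  (size s == size t) &&
  [forall i : 'I_(size s), forall j : 'I_(size s),
     (nth 0 s i < nth 0 s j) == (nth 0 t i < nth 0 t j)].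

Definition contains (pi tau : seq nat) : bool :=
  [exists b : (size pi).-tuple bool, order_iso (mask b pi) tau].

Definition avoids_all (pi : seq nat) (T : seq (seq nat)) : bool :=
  all (fun tau => ~~ contains pi tau) T.

(* p_n(T): number of set partitions of [n] (RGWs of length n) avoiding all of T.
   Letters of an RGW of length n lie in [1..n], so n-tuples over 'I_n.+1 suffice. *)
Definition pn (n : nat) (T : seq (seq nat)) : nat :=
  #|[pred t : n.-tuple 'I_n.+1 |
      is_rgw (map val t) && avoids_all (map val t) T]|.

Definition incr (m : nat) : seq nat := iota 1 m.+1.

Local Open Scope ring_scope.
Definition denom (m k : nat) : {poly int} :=
  (1 - (m.-1)%:R *: 'X) ^+ (k - m)%N * (1 - m%:R *: 'X) *
  \prod_(1 <= j < m) (1 - j%:R *: 'X).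

(* Main.v *)
Require Import Defs.
From HB Require Import structures.
From mathcomp Require Import all_boot all_order all_algebra.
From mathcomp Require Import zify ring.
Import Order.TTheory GRing.Theory Num.Theory.
Lemma card_ind (U : finType) (P : pred U) :
  #|[pred t : U | P t]| = \sum_(t : U) (P t : nat).
Proof.
rewrite -sum1_card big_mkcond /=; apply: eq_bigr => t _; rewrite inE; by case: (P t).
Qed.

Lemma card_tuple_cons (T : finType) n (Q : seq T -> bool) :
  #|[pred t : n.+1.-tuple T | Q t]| = \sum_(x : T) #|[pred t : n.-tuple T | Q (x :: t)]|.
Proof.
rewrite card_ind (reindex (fun p : T * n.-tuple T => [tuple of p.1 :: p.2])) /=.
  rewrite -(pair_big predT predT (fun x (t : n.-tuple T) => (Q (x :: t) : nat))) /=.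
  by apply: eq_bigr => x _; rewrite card_ind.
exists (fun t : n.+1.-tuple T => (thead t, [tuple of behead t])).
  move=> [x t] _ /=; congr (_, _); exact: val_inj.
by move=> t _; rewrite /= -tuple_eta.
Qed.

Definition nxt (u : seq nat) (x : nat) := if u is t :: u' then (if t == x then u' else u) else u.
Lemma subseq_consE u x s : subseq u (x :: s) = subseq (nxt u x) s.
Proof. by case: u => [|t u] //=; rewrite sub0seq. Qed.

Fixpoint cnt (m r M : nat) (u : seq nat) : nat :=
  if r is r'.+1 then \sum_(1 <= x < (minn M.+1 m).+1) cnt m r' (maxn M x) (nxt u x)
  else (u == [::]).

Definition Pw m M u (s : seq nat) := [&& rgw_aux M s, all (fun x => x <= m) s & subseq u s].

Lemma Pw_cons m M u x s : Pw m M u (x :: s) =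
  ((0 < x) && (x <= minn M.+1 m)) && Pw m (maxn M x) (nxt u x) s.
Proof.
rewrite /Pw subseq_consE /= leq_min.
by case: (0 < x); case: (x <= M.+1); case: (x <= m); rewrite ?andbF.
Qed.

Lemma sum_ord_cond B c (g : nat -> nat) : c < B ->
  \sum_(x < B) (if (0 < x) && (x <= c) then g x else 0) = \sum_(1 <= x < c.+1) g x.
Proof.
move=> cB.
rewrite -(big_mkord predT (fun x => if (0 < x) && (x <= c) then g x else 0)).
rewrite (big_cat_nat _ (n:=c.+1)) //= big_ltn //= [X in _ + X]big1_seq ?addn0 ?add0n.
  by apply: eq_big_nat => i /andP[i1 ic]; rewrite i1 -ltnS ic.
by move=> i /andP[_]; rewrite mem_index_iota => /andP[ci _]; rewrite (leqNgt i c) ci andbF.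
Qed.

Lemma card_andl (U : finType) (b : bool) (P : pred U) :
  #|[pred t : U | b && P t]| = if b then #|[pred t | P t]| else 0.
Proof. by case: b => //; rewrite card_ind big1. Qed.

Lemma tuple_count m r : forall M u B, minn m (M + r) < B ->
  #|[pred t : r.-tuple 'I_B | Pw m M u (map val t)]| = cnt m r M u.
Proof.
elim: r => [|r IH] M u B hB.
  rewrite card_ind (big_pred1 [tuple]) /=; last by move=> t /=; apply/esym/eqP; exact: tuple0.
  by rewrite /Pw /=; case: u.
rewrite (@card_tuple_cons _ r (fun s : seq 'I_B => Pw m M u (map val s))) /=.
rewrite (eq_bigr (fun x : 'I_B => if (0 < x) && (x <= minn M.+1 m) then #|[pred t : r.-tuple 'I_B | Pw m (maxn M x) (nxt u x) (map val t)]| else 0)); last first.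
  by move=> x _; rewrite -card_andl; apply: eq_card => t; rewrite !inE /= Pw_cons.
have hB' : minn M.+1 m < B.
  move: hB; lia.
rewrite (@sum_ord_cond _ _ (fun x => #|[pred t : r.-tuple 'I_B | Pw m (maxn M x) (nxt u x) (map val t)]|) hB') /=.
apply: eq_big_nat => x /andP[x1 xc]; apply: IH.
move: hB xc; lia.
Qed.

Lemma nblocks_cons x s : nblocks (x :: s) = maxn x (nblocks s).
Proof. by rewrite /nblocks big_cons. Qed.

Lemma rgw_pos M s : rgw_aux M s -> all (fun x => 0 < x) s.
Proof.
elim: s M => [|x s IH] M //= /andP[/andP[x0 _] h]; rewrite x0; exact: IH h.
Qed.

Lemma rgw_iota M s : rgw_aux M s -> subseq (iota M.+1 (nblocks s - M)) s.
Proof.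
elim: s M => [|x s IH] M /=; first by rewrite /nblocks big_nil sub0n.
move=> /andP[/andP[x0 xM] h]; rewrite nblocks_cons.
have := IH _ h.
case: (ltngtP x M.+1) xM => // [xlt _|-> _].
  have -> : maxn M x = M by lia.
  have -> : maxn x (nblocks s) - M = nblocks s - M by lia.
  move=> hs; exact: (subseq_trans hs (subseq_cons _ _)).
have -> : maxn M M.+1 = M.+1 by lia.
case E: (maxn M.+1 (nblocks s) - M) => [|K]; first by [].
have -> : nblocks s - M.+1 = K by lia.
by move=> hs /=; rewrite eqxx.
Qed.

Lemma subseq_contains s t : subseq t s -> contains s t.
Proof.
case/subseqP => b sb ->; apply/existsP.
exists (Tuple (introT eqP sb)); rewrite /order_iso /= eqxx /=.
by apply/forallP => i; apply/forallP => j.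
Qed.

Lemma order_isoP w t : order_iso w t ->
  size w = size t /\ forall i j, i < size w -> j < size w ->
     (nth 0 w i < nth 0 w j) = (nth 0 t i < nth 0 t j).
Proof.
case/andP => /eqP -> /forallP H; split=> // i j hi hj.
move: (H (Ordinal hi)) => /forallP /(_ (Ordinal hj)) /eqP //.
Qed.

Lemma mem_nblocks x s : x \in s -> x <= nblocks s.
Proof. move=> xs; exact: (@leq_bigmax_seq _ s predT (fun x => x) x xs). Qed.

Lemma avoid_incr m s : is_rgw s -> (~~ contains s (incr m)) = all (fun x => x <= m) s.
Proof.
move=> hr; apply/idP/idP.
  apply: contraR => /allPn [x xs xm]; apply: subseq_contains.
  have := @rgw_iota 0 s hr; rewrite subn0 => hs.
  apply: subseq_trans hs; rewrite /incr.
  have -> : nblocks s = m.+1 + (nblocks s - m.+1).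
    have := mem_nblocks _ _ xs; lia.
  by rewrite iotaD prefix_subseq.
move=> ha; apply/negP => /existsP [b] /order_isoP [sw H].
move: sw; rewrite /incr size_iota => sw.
have hpos : forall y, y \in mask b s -> 0 < y.
  by move=> y /mem_mask ys; move: (@rgw_pos 0 s hr) => /allP; apply.
have key : forall i, i <= m -> i < nth 0 (mask b s) i.
  elim=> [|i IH] im.
    by apply: hpos; apply: mem_nth; rewrite sw.
  apply: leq_ltn_trans (IH (ltnW im)) _.
  rewrite H ?sw //; last by rewrite ltnW.
  by rewrite !nth_iota //; lia.
have := key m (leqnn m).
have : nth 0 (mask b s) m <= m.
  by move/allP: ha; apply; apply: (@mem_mask _ _ b); apply: mem_nth; rewrite sw.
lia.
Qed.

Lemma contains_tau m s tau : is_rgw s -> all (fun x => x <= m) s -> is_rgw tau ->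
  nblocks tau = m -> contains s tau = subseq tau s.
Proof.
move=> hs ha ht hn; apply/idP/idP; last exact: subseq_contains.
case/existsP => b /order_isoP [sw H].
suff E : tau = mask b s by rewrite E mask_subseq.
set w := mask b s in sw H *.
have wpos : forall y, y \in w -> 0 < y.
  by move=> y /mem_mask ys; move: (@rgw_pos 0 s hs) => /allP; apply.
have wle : forall y, y \in w -> y <= m.
  by move=> y /mem_mask ys; move/allP: ha; apply.
have tpos : forall y, y \in tau -> 0 < y.
  by move=> y ys; move: (@rgw_pos 0 tau ht) => /allP; apply.
have tle : forall y, y \in tau -> y <= m.
  by move=> y ys; rewrite -hn; apply: mem_nblocks.
have tin : forall v, 0 < v <= m -> v \in tau.
  move=> v hv; apply: (mem_subseq (@rgw_iota 0 tau ht)).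
  by rewrite subn0 hn mem_iota; lia.
have hidx : forall v, 0 < v <= m -> index v tau < size w.
  by move=> v hv; rewrite sw index_mem tin.
have hnth : forall v, 0 < v <= m -> nth 0 tau (index v tau) = v.
  by move=> v hv; rewrite nth_index // tin.
pose g v := nth 0 w (index v tau).
have mono : forall v v', 0 < v -> v < v' -> v' <= m -> g v < g v'.
  move=> v v' v0 vv' v'm; rewrite /g H ?hidx ?hnth //; lia.
have lower : forall v, 0 < v <= m -> v <= g v.
  elim=> [|v IH] // hv.
  case: v IH hv => [|v] IH hv.
    by apply: wpos; apply: mem_nth; apply: hidx.
  have := mono v.+1 v.+2 isT (ltnSn _) (proj2 (andP hv)).
  have := IH ltac:(lia); lia.
have upper : forall d, d < m -> g (m - d) <= m - d.
  elim=> [|d IH] hd.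
    by rewrite subn0; apply: wle; apply: mem_nth; apply: hidx; lia.
  have := IH (ltnW hd).
  have := mono (m - d.+1) (m - d) ltac:(lia) ltac:(lia) ltac:(lia).
  lia.
have gv : forall v, 0 < v <= m -> g v = v.
  move=> v hv; apply/eqP; rewrite eqn_leq lower // andbT.
  have := upper (m - v) ltac:(lia); have -> : m - (m - v) = v by lia.
  by [].
apply: (@eq_from_nth _ 0) => [|i hi]; first by [].
set v := nth 0 tau i.
have hv : 0 < v <= m by rewrite tpos ?tle ?mem_nth.
have h1 := H i (index v tau) ltac:(rewrite sw //) (hidx v hv).
have h2 := H (index v tau) i (hidx v hv) ltac:(rewrite sw //).
rewrite hnth // ltnn in h1 h2.
move: h1 h2; rewrite -/(g v) gv //.
lia.
Qed.

Local Open Scope ring_scope.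

Definition eqm N (p q : {poly int}) := forall i, (i < N)%N -> p`_i = q`_i.

Lemma eqm_refl N p : eqm N p p. Proof. by []. Qed.
Lemma eqm_sym {N p q} : eqm N p q -> eqm N q p. Proof. by move=> h i hi; rewrite h. Qed.
Lemma eqm_trans {N p q r} : eqm N p q -> eqm N q r -> eqm N p r.
Proof. by move=> h1 h2 i hi; rewrite h1 ?h2. Qed.
Lemma eqmD {N p q p' q'} : eqm N p q -> eqm N p' q' -> eqm N (p + p') (q + q').
Proof. by move=> h1 h2 i hi; rewrite !coefD h1 ?h2. Qed.
Lemma eqmB {N p q p' q'} : eqm N p q -> eqm N p' q' -> eqm N (p - p') (q - q').
Proof. by move=> h1 h2 i hi; rewrite !coefB h1 ?h2. Qed.
Lemma eqmMl {N} r {p q} : eqm N p q -> eqm N (r * p) (r * q).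
Proof.
move=> h i hi; rewrite !coefM; apply: eq_bigr => j _; rewrite h //.
by apply: leq_ltn_trans hi; apply: leq_subr.
Qed.
Lemma eqmMr {N} r {p q} : eqm N p q -> eqm N (p * r) (q * r).
Proof. by move=> h; rewrite ![_ * r]mulrC; apply: eqmMl. Qed.
Lemma eqm_eq {N p q} : p = q -> eqm N p q. Proof. by move->. Qed.

Lemma eqm_cancel {N} (c : nat) {p} : eqm N (p * (1 - c%:R *: 'X)) 0 -> eqm N p 0.
Proof.
move=> h; elim=> [|i IH] hi.
  by have := h 0%N hi; rewrite mulrBr mulr1 coefB -scalerAr coefZ coefMX /= mulr0 subr0.
have := h i.+1 hi; rewrite mulrBr mulr1 coefB -scalerAr coefZ coefMX /= IH ?coef0 ?mulr0 ?subr0 //.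
exact: ltnW.
Qed.

Lemma eqm_lin {N} (c : nat) {p q r} : eqm N p (r + 'X * (q + p *+ c)) ->
  eqm N (p * (1 - c%:R *: 'X)) (r + 'X * q).
Proof.
move=> h.
have -> : p * (1 - c%:R *: 'X) = p - 'X * (p *+ c).
  by rewrite scaler_nat; ring.
refine (eqm_trans (eqmB h (eqm_refl N ('X * (p *+ c)))) _).
apply: eqm_eq; rewrite mulrDr; ring.
Qed.

Definition Phi m N M u : {poly int} := \poly_(i < N) (cnt m i M u)%:Z.

Lemma Phi_rec m N M u : eqm N (Phi m N M u)
  ((u == [::])%:R + 'X * \sum_(1 <= x < (minn M.+1 m).+1) Phi m N (maxn M x) (nxt u x)).
Proof.
move=> i hi; rewrite coefD coefXM coef_sum coef_poly hi.
case: i hi => [|i] hi /=.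
  by case: (u == [::]); rewrite ?coef1 ?coef0 addr0.
rewrite -natz natr_sum.
have -> : ((u == [::])%:R : {poly int})`_i.+1 = 0 by case: (u == [::]); rewrite ?coef1 ?coef0.
rewrite add0r; apply: eq_bigr => x _.
by rewrite /Phi coef_poly (ltnW hi) natz.
Qed.

Lemma sum_if (V : nmodType) (a b t : nat) (A B : V) : (a <= t < b)%N ->
  \sum_(a <= x < b) (if t == x then A else B) = A + B *+ (b - a).-1.
Proof.
move=> /andP[ha hb].
rewrite (big_cat_nat (n:=t) ha (ltnW hb)) (big_ltn hb) eqxx.
rewrite (eq_big_nat _ _ (F2 := fun _ => B)); last first.
  by move=> x /andP[_ hx]; rewrite (_ : (t == x) = false) //; apply/eqP; lia.
rewrite (@eq_big_nat _ _ _ t.+1 b _ (fun _ => B)); last first.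
  by move=> x /andP[hx _]; rewrite (_ : (t == x) = false) //; apply/eqP; lia.
rewrite !sumr_const_nat /= addrCA -mulrnDr; congr (_ + _ *+ _); lia.
Qed.

Lemma eqA0 m N : eqm N (Phi m N m [::]) (1 + 'X * (0 + Phi m N m [::] *+ m)).
Proof.
apply: (eqm_trans (Phi_rec _ _ _ _)); apply: eqm_eq; congr (_ + _ * _).
rewrite add0r (eq_big_nat _ _ (F2 := fun _ => Phi m N m [::])); last first.
  by move=> x hx; rewrite (_ : maxn m x = m) //; lia.
by rewrite sumr_const_nat; congr (_ *+ _); lia.
Qed.

Lemma eqA1 m N t u' : (0 < t <= m)%N ->
  eqm N (Phi m N m (t :: u')) (0 + 'X * (Phi m N m u' + Phi m N m (t :: u') *+ m.-1)).
Proof.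
move=> ht.
apply: (eqm_trans (Phi_rec _ _ _ _)); apply: eqm_eq; congr (_ + _ * _).
rewrite (eq_big_nat _ _ (F2 := fun x => if t == x then Phi m N m u' else Phi m N m (t :: u'))); last first.
  by move=> x hx; rewrite (_ : maxn m x = m) /=; [by case: (t == x) | lia].
rewrite sum_if; last lia.
by congr (_ + _ *+ _); lia.
Qed.

Lemma eqB1 m N u' : (0 < m)%N ->
  eqm N (Phi m N m.-1 (m :: u')) (0 + 'X * (Phi m N m u' + Phi m N m.-1 (m :: u') *+ m.-1)).
Proof.
move=> hm.
apply: (eqm_trans (Phi_rec _ _ _ _)); apply: eqm_eq; congr (_ + _ * _).
have -> : minn m.-1.+1 m = m by lia.
rewrite big_nat_recr //= (_ : maxn m.-1 m = m); last lia.
rewrite eqxx addrC; congr (_ + _).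
rewrite (eq_big_nat _ _ (F2 := fun x => Phi m N m.-1 (m :: u'))); last first.
  move=> x hx; rewrite (_ : maxn m.-1 x = m.-1); last lia.
  by rewrite /= (_ : (m == x) = false) //; apply/eqP; lia.
by rewrite sumr_const_nat; congr (_ *+ _); lia.
Qed.

Lemma eqB2 m N t u' : (0 < t < m)%N ->
  eqm N (Phi m N m.-1 (t :: u'))
    (0 + 'X * (Phi m N m.-1 u' + Phi m N m (t :: u') + Phi m N m.-1 (t :: u') *+ m.-2)).
Proof.
move=> ht.
apply: (eqm_trans (Phi_rec _ _ _ _)); apply: eqm_eq; congr (_ + _ * _).
have -> : minn m.-1.+1 m = m by lia.
rewrite big_nat_recr /=; last lia.
rewrite (_ : maxn m.-1 m = m); last lia.
rewrite (_ : (t == m) = false); last by apply/eqP; lia.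
rewrite (eq_big_nat _ _ (F2 := fun x => if t == x then Phi m N m.-1 u' else Phi m N m.-1 (t :: u'))); last first.
  move=> x hx; rewrite (_ : maxn m.-1 x = m.-1); last lia.
  by rewrite /=; case: (t == x).
rewrite sum_if; last lia.
rewrite (_ : (m - 1).-1 = m.-2); last lia.
by rewrite -addrA [_ *+ _ + _]addrC addrA.
Qed.

Lemma eqC m N j u' : (j.+1 < m)%N ->
  eqm N (Phi m N j (j.+1 :: u')) (0 + 'X * (Phi m N j.+1 u' + Phi m N j (j.+1 :: u') *+ j)).
Proof.
move=> hj.
apply: (eqm_trans (Phi_rec _ _ _ _)); apply: eqm_eq; congr (_ + _ * _).
have -> : minn j.+1 m = j.+1 by lia.
rewrite big_nat_recr //= (_ : maxn j j.+1 = j.+1); last lia.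
rewrite eqxx addrC; congr (_ + _).
rewrite (eq_big_nat _ _ (F2 := fun x => Phi m N j (j.+1 :: u'))); last first.
  move=> x hx; rewrite (_ : maxn j x = j); last lia.
  by rewrite /= (_ : (j.+1 == x) = false) //; apply/eqP; lia.
by rewrite sumr_const_nat; congr (_ *+ _); lia.
Qed.

Lemma eqm_sub0 {N p q} : eqm N (p - q) 0 -> eqm N p q.
Proof. by move=> h i hi; apply/eqP; rewrite -subr_eq0 -coefB h // coef0. Qed.

Lemma phiA m N u : all (fun t => (0 < t <= m)%N) u ->
  eqm N (Phi m N m u * ((1 - (m.-1)%:R *: 'X) ^+ size u * (1 - m%:R *: 'X))) ('X ^+ size u).
Proof.
elim: u => [|t u IH] /=.
  move=> _; rewrite expr0 mul1r.
  apply: (eqm_trans (eqm_lin m (eqA0 m N))); apply: eqm_eq; rewrite expr0; ring.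
move=> /andP[ht hu].
have H1 := eqm_lin m.-1 (eqA1 m N t u ht).
set L := (1 - (m.-1)%:R *: 'X) in H1 *; set K := (1 - m%:R *: 'X).
have E1 : Phi m N m (t :: u) * (L ^+ (size u).+1 * K) =
   (Phi m N m (t :: u) * L) * (L ^+ size u * K) by rewrite exprS; ring.
rewrite E1; apply: (eqm_trans (eqmMr _ H1)).
have E2 : (0 + 'X * Phi m N m u) * (L ^+ size u * K) = 'X * (Phi m N m u * (L ^+ size u * K)) by ring.
rewrite E2; apply: (eqm_trans (eqmMl 'X (IH hu))).
by apply: eqm_eq; rewrite exprS.
Qed.

Lemma phiB m' N u : all (fun t => (0 < t <= m'.+2)%N) u -> m'.+2 \in u ->
  eqm N (Phi m'.+2 N m'.+1 u) (Phi m'.+2 N m'.+2 u).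
Proof.
elim: u => [|t u IH] //= /andP[ht hu] hin.
apply: eqm_sub0.
have Z : (0 : {poly int}) = 0 + 'X * 0 by ring.
have hA := eqA1 m'.+2 N t u ht.
case: (eqVneq t m'.+2) => [tm|tm].
  subst t; apply: (eqm_cancel m'.+1); rewrite Z; apply: eqm_lin.
  have hB := eqB1 m'.+2 N u (isT : (0 < m'.+2)%N).
  apply: (eqm_trans (eqmB hB hA)); apply: eqm_eq; rewrite /=; ring.
apply: (eqm_cancel m'); rewrite Z; apply: eqm_lin.
have ht' : (0 < t < m'.+2)%N by move: ht tm => /andP[? ?] /eqP ?; lia.
have hB := eqB2 m'.+2 N t u ht'.
have hin' : m'.+2 \in u by move: hin; rewrite in_cons eq_sym (negbTE tm).
have hI := IH hu hin'.
have hB' := eqm_trans hB (eqmD (eqm_refl N 0) (eqmMl 'X (eqmD (eqmD hI (eqm_refl N _)) (eqm_refl N _)))).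
apply: (eqm_trans (eqmB hB' hA)); apply: eqm_eq; rewrite /=; ring.
Qed.

Lemma phiChain m N tau : (forall i : nat, (1 <= i <= m.-1)%N -> nth 0%N tau i.-1 = i) ->
  forall j, (j <= m.-1)%N ->
  eqm N (Phi m N 0 tau * \prod_(0 <= i < j) (1 - i%:R *: 'X)) ('X ^+ j * Phi m N j (drop j tau)).
Proof.
move=> H; elim=> [|j IH] hj.
  by apply: eqm_eq; rewrite big_geq // drop0 expr0 mulr1 mul1r.
have hn : nth 0%N tau j = j.+1 by apply: (H j.+1); lia.
have hs : (j < size tau)%N.
  by rewrite ltnNge; apply/negP => hle; move: hn; rewrite nth_default.
have hd : drop j tau = j.+1 :: drop j.+1 tau by rewrite (drop_nth 0%N hs) hn.
have hC := eqm_lin j (eqC m N j (drop j.+1 tau) ltac:(lia)).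
rewrite big_nat_recr //= mulrA.
apply: (eqm_trans (eqmMr _ (IH (ltnW hj)))).
rewrite hd -mulrA; apply: (eqm_trans (eqmMl _ hC)).
apply: eqm_eq; rewrite exprSr; ring.
Qed.

Lemma phi_main m' N tau : is_rgw tau -> nblocks tau = m'.+2 ->
  (forall i : nat, (1 <= i <= m'.+1)%N -> nth 0%N tau i.-1 = i) ->
  eqm N (Phi m'.+2 N 0 tau * denom m'.+2 (size tau)) ('X ^+ size tau).
Proof.
move=> ht hn H.
have hall : all (fun t => (0 < t <= m'.+2)%N) tau.
  apply/allP => x xs; rewrite -hn mem_nblocks // andbT.
  by move: (@rgw_pos 0 tau ht) => /allP; apply.
have hmt : m'.+2 \in tau.
  apply: (mem_subseq (@rgw_iota 0 tau ht)); rewrite subn0 hn mem_iota; lia.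
have htake : m'.+2 \notin take m'.+1 tau.
  apply/negP => /(nthP 0%N) [i hi hi'].
  have hi2 : (i < m'.+1)%N by move: hi; rewrite size_take_min; lia.
  move: hi'; rewrite (nth_take _ hi2) -[X in nth _ _ X]/(i.+1.-1) (H i.+1); lia.
have hd : m'.+2 \in drop m'.+1 tau.
  by move: hmt; rewrite -{1}(cat_take_drop m'.+1 tau) mem_cat (negbTE htake).
have hsz : (m'.+2 <= size tau)%N.
  have : (0 < size (drop m'.+1 tau))%N by case: (drop m'.+1 tau) hd.
  rewrite size_drop; lia.
have hallD : all (fun t => (0 < t <= m'.+2)%N) (drop m'.+1 tau).
  by apply/allP => x /mem_drop xs; move/allP: hall; apply.
have hC := @phiChain m'.+2 N tau H m'.+1 (leqnn m'.+1).
have hB := phiB m' N _ hallD hd.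
have hA := phiA m'.+2 N _ hallD.
set d := drop m'.+1 tau in hC hB hA.
set L := (1 - (m'.+2.-1)%:R *: 'X) in hA *.
set K := (1 - (m'.+2)%:R *: 'X) in hA *.
set P := \prod_(0 <= i < m'.+1) (1 - i%:R *: 'X) in hC.
have hsd : size d = (size tau - m'.+2).+1 by rewrite size_drop; lia.
have E1 : Phi m'.+2 N 0 tau * denom m'.+2 (size tau) =
    (Phi m'.+2 N 0 tau * P) * (L ^+ size d * K).
  rewrite /denom /P big_nat_recr //= (big_ltn (ltn0Sn m')) mulr0n scale0r subr0 mul1r.
  rewrite hsd exprS -/L -/K; ring.
rewrite E1; apply: (eqm_trans (eqmMr _ hC)).
rewrite -mulrA; apply: (eqm_trans (eqmMl _ (eqmMr _ hB))).
apply: (eqm_trans (eqmMl _ hA)).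
apply: eqm_eq; rewrite -exprD hsd; congr (_ ^+ _); lia.
Qed.

Lemma pn_diff m tau i : is_rgw tau -> nblocks tau = m ->
  ((pn i [:: incr m])%:Z - (pn i [:: incr m; tau])%:Z) = (cnt m i 0 tau)%:Z.
Proof.
move=> ht hn.
have E : pn i [:: incr m] =
    #|[pred t : i.-tuple 'I_i.+1 | Pw m 0 tau (map val t)]| + pn i [:: incr m; tau].
  rewrite /pn -(cardID [pred t : i.-tuple 'I_i.+1 | subseq tau (map val t)]).
  congr (_ + _); apply: eq_card => t; rewrite !inE /= /Pw -/(is_rgw _);
  case hr: (is_rgw _); rewrite ?andbF //= avoid_incr //;
  case ha: (all (fun x => (x <= m)%N) _); rewrite ?andbF ?andbT //= ?(contains_tau m) //;
  by case: (subseq _ _).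
rewrite E PoszD addrK (@tuple_count m i 0 tau i.+1) //; lia.
Qed.

Theorem theorem2p8 (m : nat) (tau : seq nat) :
  (2 <= m)%N -> is_rgw tau -> nblocks tau = m ->
  (forall i : nat, (1 <= i <= m.-1)%N -> nth 0%N tau i.-1 = i) ->
  forall n : nat,
    (\poly_(i < n.+1) ((pn i [:: incr m])%:Z - (pn i [:: incr m; tau])%:Z)
       * denom m (size tau))`_n = (n == size tau)%:R.
Proof.
case: m => [|[|m']] // _ ht hn H n.
have -> : \poly_(i < n.+1) ((pn i [:: incr m'.+2])%:Z - (pn i [:: incr m'.+2; tau])%:Z)
    = Phi m'.+2 n.+1 0 tau.
  by apply: eq_poly => i _; rewrite pn_diff.
by rewrite (phi_main m' n.+1 tau ht hn H n (ltnSn n)) coefXn.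
Qed.
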